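(* Consider a restless bandit, set system $(N^{\{0,1\}},\mathcal F)$ as in the context, and suppose the bandit is PCL-indexable relative to $b^u$ and $\mathcal F$-policies, with the adaptive-greedy algorithm on input $\widehat{\mathbf h}^0_{N^{\{0,1\}}}$ producing $\boldsymbol\pi=(\pi_1,\dots,\pi_n)$ and $\boldsymbol\nu$; let $S_k=\{\pi_k,\dots,\pi_n\}$ ($1\le k\le n$), $S_{n+1}=\emptyset$, and $v^S_i(\nu)=v^S_i+\nu b^S_i$. Then for each $i\in N$, $v_i(\nu)$ is continuous, concave and piecewise linear in $\nu$, and $$v_i(\nu)=\min\{v^{S_k}_i(\nu):1\le k\le n+1\}=\begin{cases} v^{S_1}_i(\nu), & \nu\in(-\infty,\nu_{\pi_1}],\\ v^{S_k}_i(\nu), & \nu\in[\nu_{\pi_{k-1}},\nu_{\pi_k}],\ 2\le k\le n,\\ v^{S_{n+1}}_i(\nu), & \nu\in[\nu_{\pi_n},+\infty).\end{cases}$$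
   Context: Restless bandit: finite state space $N=N^{\{0,1\}}\cup N^{\{1\}}$ (disjoint; controllable and uncontrollable states); actions $a\in\{0,1\}$; one-period costs $h^a_i$, transition probabilities $p^a_{ij}$ with $p^1_{ij}=p^0_{ij}$ for $i\in N^{\{1\}}$; discount factor $\beta\in(0,1)$; activity weights $\theta^1_j>0$. Stationary policies $u:N\to[0,1]$ (probability of active action) with $u(i)=1$ on $N^{\{1\}}$. $v^u_i=E^u_i[\sum_{t\ge0}h^{a(t)}_{X(t)}\beta^t]$, $b^u_i=E^u_i[\sum_{t\ge0}\theta^1_{X(t)}a(t)\beta^t]$. For $S\subseteq N^{\{0,1\}}$ the $S$-active policy is active on $S\cup N^{\{1\}}$, passive elsewhere; $v^S_i,b^S_i$ its measures. $v_i(\nu)=\min_u\{v^u_i+\nu b^u_i\}$. Marginal workloads $w^S_i=\theta^1_i1\{i\in N^{\{0,1\}}\}+\beta\sum_j(p^1_{ij}-p^0_{ij})b^S_j$. $\widehat{\mathbf h}^0=\mathbf h^0-(\mathbf I-\beta\mathbf P^0)(\mathbf I-\beta\mathbf P^1)^{-1}\mathbf h^1$. $\mathcal F\subseteq2^{N^{\{0,1\}}}$: $\emptyset\in\mathcal F$; each nonempty $S\in\mathcal F$ has nonempty $\partial^-S=\{j\in S:S\setminus\{j\}\in\mathcal F\}$; each $S\in\mathcal F$ other than $N^{\{0,1\}}$ has $j\notin S$ with $S\cup\{j\}\in\mathcal F$. Adaptive-greedy algorithm on input $\mathbf c$, $n=|N^{\{0,1\}}|$: $S_1=N^{\{0,1\}}$,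 $y^{S_1}=\min\{c_j/w^{S_1}_j:j\in\partial^-S_1\}$, $\pi_1$ a minimizer, $\nu_{\pi_1}=y^{S_1}$; for $k=2..n$: $S_k=S_{k-1}\setminus\{\pi_{k-1}\}$, $y^{S_k}=\min\{(c_j-\sum_{l<k}y^{S_l}w^{S_l}_j)/w^{S_k}_j:j\in\partial^-S_k\}$, $\pi_k$ a minimizer, $\nu_{\pi_k}=\nu_{\pi_{k-1}}+y^{S_k}$. PCL-indexability: (i) $w^S_j>0$ for $S\in\mathcal F$, $j\in N^{\{0,1\}}$; (ii) on input $(\widehat h^0_j)_{j\in N^{\{0,1\}}}$ the output satisfies $\nu_{\pi_1}\le\cdots\le\nu_{\pi_n}$. *)

(* Defs.v *)
From mathcomp Require Import all_boot all_order all_algebra.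
From mathcomp Require Import all_classical all_reals all_analysis.
Set Implicit Arguments. Unset Strict Implicit. Unset Printing Implicit Defensive.
Import Order.TTheory GRing.Theory Num.Theory.
Local Open Scope ring_scope.
Local Open Scope classical_set_scope.

Section Bandit.
Variables (R : realType) (m : nat).
(* ctrl = N^{0,1}; its complement = N^{1} (uncontrollable states) *)
Variable ctrl : {set 'I_m}.
Variables (P0 P1 : 'M[R]_m) (h0 h1 theta1 : 'I_m -> R) (beta : R).

Definition stochastic (P : 'M[R]_m) : Prop :=
  (forall i j, 0 <= P i j) /\ (forall i, \sum_j P i j = 1).

(* admissible stationary (randomized) policy: u i = prob. of the active action *)
Definition admissible (u : 'I_m -> R) : Prop :=
  (forall i, 0 <= u i <= 1) /\ (forall i, i \notin ctrl -> u i = 1).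

Definition Pu (u : 'I_m -> R) : 'M[R]_m :=
  \matrix_(i, j) (u i * P1 i j + (1 - u i) * P0 i j).
Definition hu (u : 'I_m -> R) : 'cV[R]_m :=
  \col_i (u i * h1 i + (1 - u i) * h0 i).
Definition thu (u : 'I_m -> R) : 'cV[R]_m :=
  \col_i (theta1 i * u i).

(* expected total discounted reward E_i[sum_t r(X t, a t) beta^t]
   = sum_t beta^t ((P^u)^t r)_i *)
Definition disc_sum (P : 'M[R]_m) (r : 'cV[R]_m) (i : 'I_m) : R :=
  limn (fun n => \sum_(t < n) beta ^+ t * ((P ^+ t *m r) i ord0)).

Definition vu (u : 'I_m -> R) (i : 'I_m) : R := disc_sum (Pu u) (hu u) i.
Definition bu (u : 'I_m -> R) (i : 'I_m) : R := disc_sum (Pu u) (thu u) i.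

Definition Spol (S : {set 'I_m}) (i : 'I_m) : R :=
  if (i \in S) || (i \notin ctrl) then 1 else 0.
Definition vS (S : {set 'I_m}) (i : 'I_m) : R := vu (Spol S) i.
Definition bS (S : {set 'I_m}) (i : 'I_m) : R := bu (Spol S) i.
Definition vSnu (S : {set 'I_m}) (nu : R) (i : 'I_m) : R := vS S i + nu * bS S i.

Definition vopt (nu : R) (i : 'I_m) : R :=
  inf [set vu u i + nu * bu u i | u in admissible].

Definition wS (S : {set 'I_m}) (i : 'I_m) : R :=
  theta1 i * (i \in ctrl)%:R + beta * \sum_j (P1 i j - P0 i j) * bS S j.

Definition hhat0 : 'I_m -> R :=
  let c := (\col_i h0 i) - (1%:M - beta *: P0) *m invmx (1%:M - beta *: P1) *m (\col_i h1 i)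
  in fun i => c i ord0.

Definition dminus (F : {set {set 'I_m}}) (S : {set 'I_m}) : {set 'I_m} :=
  [set j in S | S :\ j \in F].

Definition accessible_setsys (F : {set {set 'I_m}}) : Prop :=
  (forall S, S \in F -> S \subset ctrl) /\
  (finset.set0 : {set 'I_m}) \in F /\
  (forall S, S \in F -> S != finset.set0 -> dminus F S != finset.set0) /\
  (forall S, S \in F -> S != ctrl -> exists2 j, j \notin S & S :|: [set j] \in F).

(* S_{k+1} = {pi_{k+1}, ..., pi_n} (0-indexed: k-th suffix) *)
Definition Ssuf (pi : seq 'I_m) (k : nat) : {set 'I_m} := [set x in drop k pi].

(* (pi, nu) is a (possible) output of the adaptive-greedy algorithm on input c
   (any tie-breaking among minimizers).  pi = [:: pi_1; ...; pi_n],
   nu is indexed by states, nu pi_k = nu_{pi_k}. *)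
Definition greedy_output (F : {set {set 'I_m}}) (c : 'I_m -> R)
    (pi : seq 'I_m) (nu : 'I_m -> R) : Prop :=
  uniq pi /\ [set x in pi] = ctrl /\
  exists y : nat -> R, forall (k : nat) (p : 'I_m), onth pi k = Some p ->
    let r j := (c j - \sum_(l < k) y l * wS (Ssuf pi l) j) / wS (Ssuf pi k) j in
    [/\ p \in dminus F (Ssuf pi k),
        y k = r p,
        (forall j, j \in dminus F (Ssuf pi k) -> y k <= r j) &
        nu p = \sum_(l < k.+1) y l].

Definition PCL_indexable (F : {set {set 'I_m}}) (pi : seq 'I_m) (nu : 'I_m -> R) : Prop :=
  (forall S j, S \in F -> j \in ctrl -> 0 < wS S j) /\
  greedy_output F hhat0 pi nu /\
  (forall k p q, onth pi k = Some p -> onth pi k.+1 = Some q -> nu p <= nu q).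

End Bandit.

Definition concave_fun (R : realType) (f : R -> R) : Prop :=
  forall x y t, 0 <= t <= 1 -> t * f x + (1 - t) * f y <= f (t * x + (1 - t) * y).

Definition piecewise_linear (R : realType) (f : R -> R) : Prop :=
  exists s : seq R, forall a b, a <= b -> (forall c, c \in s -> ~ (a < c < b)) ->
    exists p q : R, forall x, a <= x <= b -> f x = p + q * x.

(* Main.v *)
Require Import Defs.
From mathcomp Require Import all_boot all_order all_algebra.
From mathcomp Require Import all_classical all_reals all_analysis.
From mathcomp Require Import lra ring zify.
Import Order.TTheory GRing.Theory Num.Theory numFieldNormedType.Exports.
Local Open Scope ring_scope.

Section Gen.
Variables (R : realType) (m : nat) (beta : R).
Hypothesis hb : 0 < beta < 1.

Lemma minprin {P : 'M[R]_m} {D d : 'cV[R]_m} : stochastic P ->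
  (forall i, 0 <= d i 0) -> D = d + beta *: (P *m D) -> forall i, 0 <= D i 0.
Proof.
move=> [P0 P1] hd hD i.
pose k := [arg min_(j < i) D j 0]%O.
have hk : forall j, D k 0 <= D j 0.
  rewrite /k; case: arg_minP => // a _ ha j; exact: ha.
have : D k 0 = d k 0 + beta * \sum_j P k j * D j 0.
  by rewrite {1}hD !mxE; congr (_ + _); rewrite !mxE.
have hs : D k 0 <= \sum_j P k j * D j 0.
  apply: le_trans (_ : \sum_j P k j * D k 0 <= _).
    by rewrite -mulr_suml P1 mul1r.
  apply: ler_sum => j _; apply: ler_wpM2l => //.
move: (hd k) hb hs => hdk /andP[hb0 hb1] hs hDk.
have : (1 - beta) * D k 0 >= 0.
  have h2 : beta * D k 0 <= beta * \sum_j P k j * D j 0 by apply: ler_wpM2l => //; exact: ltW.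
  nra.
move=> h; apply: le_trans (hk i).
have h1b : 0 < 1 - beta by rewrite subr_gt0.
by rewrite -(pmulr_rge0 _ h1b).
Qed.

Lemma unitA (P : 'M[R]_m) : stochastic P -> (1%:M - beta *: P) \in unitmx.
Proof.
move=> hP.
set A := 1%:M - beta *: P.
rewrite -unitmx_tr -row_free_unit -kermx_eq0.
have K0 : forall u : 'rV_m, u *m A^T = 0 -> u = 0.
  move=> u hu.
  have hy : A *m u^T = 0 by rewrite -(trmxK (A *m u^T)) trmx_mul trmxK hu trmx0.
  have hy' : u^T = 0 + beta *: (P *m u^T).
    move: hy; rewrite /A mulmxBl mul1mx -scalemxAl => /eqP; rewrite subr_eq0 => /eqP e.
    by rewrite add0r {1}e.
  have hn : - u^T = 0 + beta *: (P *m (- u^T)).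
    by rewrite add0r mulmxN scalerN {1}hy' add0r.
  have h2 : forall i, 0 <= (0 : 'cV[R]_m) i 0 by move=> i; rewrite mxE.
  have h3 := minprin hP h2 hn.
  have h4 := minprin hP h2 hy'.
  apply/matrixP => a b; rewrite [a]ord1 mxE.
  have := h3 b; have := h4 b; rewrite !mxE => p q.
  apply/eqP; rewrite eq_le; apply/andP; split => //.
  by rewrite -oppr_ge0.
apply/eqP/row_matrixP => k; rewrite row0; apply: K0.
by rewrite -row_mul mulmx_ker row0.
Qed.


Lemma powbound (P : 'M[R]_m) (W : 'cV[R]_m) : stochastic P ->
  forall n i, `|(P ^+ n *m W) i 0| <= \sum_j `|W j 0|.
Proof.
move=> [Pp Ps]; elim=> [|n IH] i.
  rewrite expr0 mul1mx (bigD1 i) //= ler_wpDr //.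
  by apply: sumr_ge0 => j _.
rewrite exprS -mulmxE -mulmxA mxE.
apply: le_trans (ler_norm_sum _ _ _) _.
apply: le_trans (_ : \sum_k P i k * \sum_j `|W j 0| <= _).
  apply: ler_sum => k _; rewrite normrM ger0_norm //.
  by apply: ler_wpM2l => //.
by rewrite -mulr_suml Ps mul1r.
Qed.

Lemma partial_sum (P : 'M[R]_m) (W r : 'cV[R]_m) i :
  r = W - beta *: (P *m W) -> forall n,
  \sum_(t < n) beta ^+ t * ((P ^+ t *m r) i 0) =
    W i 0 - beta ^+ n * ((P ^+ n *m W) i 0).
Proof.
move=> hr; elim=> [|n IH].
  by rewrite big_ord0 expr0 mul1r mul1mx subrr.
have e : P ^+ n *m P = P ^+ n.+1 by rewrite exprSr mulmxE.
rewrite big_ord_recr /= IH hr mulmxBr -scalemxAr mulmxA e.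
rewrite !mxE [beta ^+ n.+1]exprSr; ring.
Qed.

Lemma disc_sumE (P : 'M[R]_m) (r : 'cV[R]_m) i : stochastic P ->
  disc_sum beta P r i = (invmx (1%:M - beta *: P) *m r) i 0.
Proof.
move=> hP.
set W := invmx (1%:M - beta *: P) *m r.
have hr : r = W - beta *: (P *m W).
  rewrite /W -[X in X - _]mul1mx scalemxAl -mulmxBl mulmxA mulmxV ?mul1mx //.
  exact: unitA.
rewrite /disc_sum.
under eq_fun do rewrite (@partial_sum P W r i hr).
apply: cvg_lim => //.
set M := \sum_j `|W j 0|.
have hb1 : `|beta| < 1 by case/andP: hb => h1 h2; rewrite ger0_norm // ltW.
have e0 : ((fun n => beta ^+ n * M) @ \oo --> (0 : R))%classic.
  by rewrite -(mul0r M); apply: cvgMl; exact: cvg_expr.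
have e1 : ((fun n => beta ^+ n * ((P ^+ n *m W) i 0)) @ \oo --> (0 : R))%classic.
  apply: (@squeeze_cvgr _ _ _ _ (fun n => - (beta ^+ n * M)) (fun n => beta ^+ n * M)).
  - near=> n.
    have hbn : 0 <= beta ^+ n by apply: exprn_ge0; case/andP: hb => h1 _; exact: ltW.
    have := @powbound P W hP n i; rewrite ler_norml => /andP[h1 h2].
    by rewrite -mulrN !ler_wpM2l.
  - by rewrite -oppr0; apply: cvgN.
  - exact: e0.
rewrite -[X in (_ --> X)%classic]subr0; apply: cvgB => //; exact: cvg_cst.
Unshelve. all: by end_near.
Qed.

End Gen.


Lemma lipc (R : realType) (f : R -> R) (B : R) : 0 <= B ->
  (forall x z, `|f z - f x| <= B * `|z - x|) -> continuous f.
Proof.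
move=> hB hL x; apply/cvgrPdist_le => e e0.
have dpos : 0 < e / (B + 1) by apply: divr_gt0 => //; lra.
have := @cvg_id _ (nbhs x) => /cvgrPdist_lt /(_ _ dpos).
apply: filterS => t ht.
rewrite distrC; apply: le_trans (hL x t) _.
have : B * `|t - x| <= (B + 1) * (e / (B + 1)).
  apply: ler_pM; try lra; rewrite ?normr_ge0 // distrC; exact: ltW.
move=> h; apply: le_trans h _; rewrite mulrCA mulfV ?mulr1 //; apply: lt0r_neq0; lra.
Qed.

Section Bandit2.
Variables (R : realType) (m : nat) (ctrl : {set 'I_m}).
Variables (P0 P1 : 'M[R]_m) (h0 h1 theta1 : 'I_m -> R) (beta : R).
Hypothesis hP0 : stochastic P0.
Hypothesis hP1 : stochastic P1.
Hypothesis hunc : forall i j, i \notin ctrl -> P1 i j = P0 i j.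
Hypothesis hb : 0 < beta < 1.
Hypothesis hth : forall i, 0 < theta1 i.

Definition Pm u := Pu P0 P1 u.
Definition Au u := 1%:M - beta *: Pm u.
Definition fu u (x : R) : 'cV[R]_m := hu h0 h1 u + x *: thu theta1 u.
Definition Y u x := invmx (Au u) *m fu u x.
Definition sp S := Spol R ctrl S.

Lemma stochPu u : admissible ctrl u -> stochastic (Pm u).
Proof.
move=> [hu1 hu2]; split.
  move=> i j; rewrite mxE; have := hu1 i => /andP[a b].
  case: hP0 => [p0 _]; case: hP1 => [p1 _].
  apply: addr_ge0; apply: mulr_ge0 => //; by rewrite subr_ge0.
move=> i; under eq_bigr do rewrite mxE.
rewrite big_split /= -!mulr_sumr.
by case: hP0 => [_ ->]; case: hP1 => [_ ->]; rewrite !mulr1 addrCA subrr addr0.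
Qed.

Lemma valE u x i : admissible ctrl u ->
  vu P0 P1 h0 h1 beta u i + x * bu P0 P1 theta1 beta u i = Y u x i 0.
Proof.
move=> hu; rewrite /vu /bu !disc_sumE //; try exact: stochPu.
by rewrite /Y /fu mulmxDr -scalemxAr !mxE.
Qed.

Lemma Yeq u x : admissible ctrl u -> Au u *m Y u x = fu u x.
Proof. by move=> hu; rewrite /Y mulmxA mulmxV ?mul1mx //; apply: unitA => //; exact: stochPu. Qed.

Lemma Yuniq u x X : admissible ctrl u -> Au u *m X = fu u x -> X = Y u x.
Proof.
move=> hu hX; rewrite /Y -hX mulmxA mulVmx ?mul1mx //.
by apply: unitA => //; exact: stochPu.
Qed.

Lemma rowA u (X : 'cV[R]_m) j : (Au u *m X) j 0 =
  X j 0 - beta * (u j * \sum_k P1 j k * X k 0 + (1 - u j) * \sum_k P0 j k * X k 0).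
Proof.
rewrite /Au mulmxBl mul1mx -scalemxAl !mxE; congr (_ - _ * _).
rewrite !mulr_sumr -big_split; apply: eq_bigr => k _; rewrite !mxE /=; ring.
Qed.

Lemma rowf u x j : fu u x j 0 = u j * h1 j + (1 - u j) * h0 j + x * (theta1 j * u j).
Proof. by rewrite !mxE. Qed.

Lemma sp_adm S : admissible ctrl (sp S).
Proof.
split=> i; rewrite /sp /Spol.
  by case: ifP => _; rewrite ?lexx ?ler01 ?andbT.
by move=> ->; rewrite orbT.
Qed.

Lemma vSnuE S x k : vSnu ctrl P0 P1 h0 h1 theta1 beta S x k = Y (sp S) x k 0.
Proof. by rewrite /vSnu /vS /bS valE //; exact: sp_adm. Qed.

Definition g S x j := h0 j - h1 j - x * theta1 j * (j \in ctrl)%:R +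
  beta * \sum_k (P0 j k - P1 j k) * Y (sp S) x k 0.

Lemma g_aff S x j : g S x j = g S 0 j - x * wS ctrl P0 P1 theta1 beta S j.
Proof.
rewrite /g /wS.
have e : forall y k, Y (sp S) y k 0 = vS ctrl P0 P1 h0 h1 beta S k + y * bS ctrl P0 P1 theta1 beta S k.
  by move=> y k; rewrite -vSnuE.
under eq_bigr do rewrite e.
under [in X in _ = X - _]eq_bigr do rewrite e.
have -> : \sum_k (P0 j k - P1 j k) * (vS ctrl P0 P1 h0 h1 beta S k + x * bS ctrl P0 P1 theta1 beta S k) =
  \sum_k (P0 j k - P1 j k) * (vS ctrl P0 P1 h0 h1 beta S k + 0 * bS ctrl P0 P1 theta1 beta S k)
  - x * \sum_k (P1 j k - P0 j k) * bS ctrl P0 P1 theta1 beta S k.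
  by rewrite mulr_sumr -sumrB; apply: eq_bigr => k _; ring.
ring.
Qed.


Lemma rowS S x j : Y (sp S) x j 0 =
  sp S j * h1 j + (1 - sp S j) * h0 j + x * (theta1 j * sp S j) +
  beta * (sp S j * \sum_k P1 j k * Y (sp S) x k 0 + (1 - sp S j) * \sum_k P0 j k * Y (sp S) x k 0).
Proof.
have := @Yeq (sp S) x (sp_adm S) => /matrixP /(_ j 0).
rewrite rowA rowf => <-; ring.
Qed.

Lemma gE S x j : g S x j = h0 j - h1 j - x * theta1 j * (j \in ctrl)%:R +
  beta * (\sum_k P0 j k * Y (sp S) x k 0 - \sum_k P1 j k * Y (sp S) x k 0).
Proof.
by rewrite /g -sumrB; congr (_ + _ * _); apply: eq_bigr => k _; rewrite mulrBl.
Qed.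

Lemma opt (S : {set 'I_m}) (x : R) : (forall j, j \in ctrl -> (j \in S -> 0 <= g S x j) /\ (j \notin S -> g S x j <= 0)) ->
  forall u, admissible ctrl u -> forall i, Y (sp S) x i 0 <= Y u x i 0.
Proof.
move=> H u hu i.
set D := Y u x - Y (sp S) x.
set d := fu u x - Au u *m Y (sp S) x.
have hD : D = d + beta *: (Pm u *m D).
  have : Au u *m D = d by rewrite /D /d mulmxBr (Yeq u x hu).
  rewrite /Au mulmxBl mul1mx -scalemxAl => <-; by rewrite subrK.
have hd : forall j, 0 <= d j 0.
  move=> j.
  have -> : d j 0 = fu u x j 0 - (Au u *m Y (sp S) x) j 0 by rewrite /d !mxE.
  rewrite rowf rowA rowS.
  have := hu => [[hu1 hu2]].
  have := H j; have eg := gE S x j.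
  set s1 := \sum_k P1 j k * _; set s0 := \sum_k P0 j k * _.
  have hhu := hu1 j; case/andP: hhu => hu0 hu1'.
  case: (boolP (j \in ctrl)) => hj.
    move=> /(_ isT) [Hin Hout].
    rewrite /sp /Spol hj /= orbF.
    case: (boolP (j \in S)) => hjS.
      have := Hin hjS; rewrite eg hj -/s1 -/s0 /= ?mulr1n ?mulr1 => hg.
      have h1u : 0 <= 1 - u j by rewrite subr_ge0.
      have : 0 <= (1 - u j) * (h0 j - h1 j - x * theta1 j + beta * (s0 - s1)) by apply: mulr_ge0.
      move=> hh. nra.
    have := Hout hjS; rewrite eg hj -/s1 -/s0 /= ?mulr1n ?mulr1 => hg.
    have : 0 <= u j * - (h0 j - h1 j - x * theta1 j + beta * (s0 - s1)).
      by apply: mulr_ge0 => //; rewrite oppr_ge0.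
    move=> hh. nra.
  move=> _; rewrite hu2 // /sp /Spol hj orbT.
  rewrite subrr !mul0r !mulr1 addr0; lra.
have := @minprin R m beta hb _ _ _ (stochPu u hu) hd hD i.
by rewrite /D !mxE subr_ge0.
Qed.

Lemma removal (S : {set 'I_m}) (x : R) (p : 'I_m) : p \in S -> p \in ctrl -> g S x p = 0 ->
  Y (sp (S :\ p)) x = Y (sp S) x.
Proof.
move=> hpS hpc hg0.
apply/esym/Yuniq; first exact: sp_adm.
apply/matrixP => j b; rewrite [b]ord1 rowA rowf.
have := rowS S x j.
case: (eqVneq j p) => [->|hjp].
  have e1 : sp (S :\ p) p = 0 by rewrite /sp /Spol !inE eqxx hpc.
  have e2 : sp S p = 1 by rewrite /sp /Spol hpS.
  rewrite e1 e2 => ->.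
  move: hg0; rewrite gE hpc /= ?mulr1n ?mulr1 => hg0. lra.
have -> : sp (S :\ p) j = sp S j by rewrite /sp /Spol !inE hjp.
move=> ->; ring.
Qed.


Lemma g_removal (S : {set 'I_m}) (x : R) (p j : 'I_m) : p \in S -> p \in ctrl -> g S x p = 0 ->
  g (S :\ p) x j = g S x j.
Proof. by move=> a b c; rewrite /g removal. Qed.

Lemma g_diff (S : {set 'I_m}) (x x' : R) (j : 'I_m) : g S x j = g S x' j + (x' - x) * wS ctrl P0 P1 theta1 beta S j.
Proof. rewrite (g_aff S x) (g_aff S x'); ring. Qed.

Lemma rowI (P : 'M[R]_m) (X : 'cV[R]_m) j b :
  ((1%:M - beta *: P) *m X) j b = X j b - beta * \sum_k P j k * X k b.
Proof. by rewrite mulmxBl mul1mx -scalemxAl !mxE. Qed.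

Lemma hhat0E j : hhat0 P0 P1 h0 h1 beta j = g ctrl 0 j.
Proof.
have hall : forall i, sp ctrl i = 1.
  by move=> i; rewrite /sp /Spol; case: (boolP (i \in ctrl)) => h; rewrite ?h ?orbT.
have ePm : Pm (sp ctrl) = P1 by apply/matrixP => a b; rewrite /Pm /Pu !mxE hall; ring.
have ef : fu (sp ctrl) 0 = \col_i h1 i.
  by apply/matrixP => a b; rewrite /fu scale0r addr0 !mxE hall; ring.
have eY : Y (sp ctrl) 0 = invmx (1%:M - beta *: P1) *m \col_i h1 i by rewrite /Y /Au ePm ef.
have hv : (1%:M - beta *: P1) *m (invmx (1%:M - beta *: P1) *m \col_i h1 i) = \col_i h1 i.
  by rewrite mulmxA mulmxV ?mul1mx //; exact: unitA.
rewrite /g eY /hhat0 -mulmxA.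
set v1 := invmx _ *m _ in hv *.
clearbody v1.
have hv' : v1 j 0 - beta * \sum_k P1 j k * v1 k 0 = h1 j.
  by move/matrixP: hv => /(_ j 0); rewrite rowI => ->; rewrite mxE.
have e2 := rowI P0 v1 j ord0.
rewrite !mxE in e2 *.
rewrite e2 mul0r mul0r subr0.
have -> : (ord0 : 'I_1) = 0 by [].
have -> : \sum_k (P0 j k - P1 j k) * v1 k 0 = \sum_k P0 j k * v1 k 0 - \sum_k P1 j k * v1 k 0.
  by rewrite -sumrB; apply: eq_bigr => k _; ring.
rewrite -hv'; ring.
Qed.

Variables (F : {set {set 'I_m}}) (pi : seq 'I_m) (nu : 'I_m -> R).
Hypothesis hacc : accessible_setsys ctrl F.
Hypothesis hw : forall S j, S \in F -> j \in ctrl -> 0 < wS ctrl P0 P1 theta1 beta S j.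
Hypothesis huniq : uniq pi.
Hypothesis hctrl : [set x in pi] = ctrl.
Variable y : nat -> R.
Hypothesis hy : forall (k : nat) (p : 'I_m), onth pi k = Some p ->
    let r j := (hhat0 P0 P1 h0 h1 beta j - \sum_(l < k) y l * wS ctrl P0 P1 theta1 beta (Ssuf pi l) j)
               / wS ctrl P0 P1 theta1 beta (Ssuf pi k) j in
    [/\ p \in dminus F (Ssuf pi k),
        y k = r p,
        (forall j, j \in dminus F (Ssuf pi k) -> y k <= r j) &
        nu p = \sum_(l < k.+1) y l].
Hypothesis hmono : forall k p q, onth pi k = Some p -> onth pi k.+1 = Some q -> nu p <= nu q.

Local Notation n := (size pi).
Local Notation w S j := (wS ctrl P0 P1 theta1 beta S j).
Definition mu k := \sum_(l < k) y l.

Lemma onth_some {k p} : onth pi k = Some p -> (k < n)%N /\ forall x0, nth x0 pi k = p.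
Proof.
move=> h; split; last by move=> x0; exact: onth_nth.
by have := onthTE pi k; rewrite h.
Qed.

Lemma onth_ex k x0 : (k < n)%N -> onth pi k = Some (nth x0 pi k).
Proof.
elim: pi k => [|a s IH] [|k] //= hk.
by apply: IH.
Qed.

Lemma Ssuf0 : Ssuf pi 0 = ctrl.
Proof. by rewrite /Ssuf drop0. Qed.

Lemma SsufS {k p} : onth pi k = Some p -> Ssuf pi k.+1 = Ssuf pi k :\ p /\ p \in Ssuf pi k.
Proof.
move=> h; have [hk hn] := onth_some h.
have e := drop_nth p hk; rewrite hn in e.
have hu : uniq (drop k pi) by rewrite drop_uniq.
rewrite e /= in hu; case/andP: hu => hpn _.
split; last by rewrite /Ssuf inE e inE eqxx.
apply/setP => z; rewrite /Ssuf !inE e inE.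
case: (eqVneq z p) => [->|//]; by rewrite (negbTE hpn).
Qed.

Lemma mem_Ssuf k {l j} : onth pi l = Some j -> (j \in Ssuf pi k) = (k <= l)%N.
Proof.
move=> h; have [hl hn] := onth_some h.
rewrite /Ssuf inE.
case: (leqP k l) => hkl.
  have : nth j (drop k pi) (l - k) = j by rewrite nth_drop subnKC.
  move=> <-; apply: mem_nth; rewrite size_drop ltn_sub2r //; exact: leq_ltn_trans hkl hl.
apply/negP => hd.
have ht : j \in take k pi.
  have : nth j (take k pi) l = j by rewrite nth_take.
  move=> <-; apply: mem_nth; rewrite size_take; by case: ifP.
move: huniq; rewrite -(cat_take_drop k pi) cat_uniq => /and3P[_ /hasPn hh _].
by move: (hh j hd); rewrite ht.
Qed.

Lemma ctrl_F : ctrl \in F.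
Proof.
case: hacc => [hsub [h0F [_ hgrow]]].
suff : forall d S, S \in F -> (#|ctrl| - #|S| <= d)%N -> ctrl \in F.
  by move=> /(_ #|ctrl| _ h0F); apply; rewrite leq_subr.
elim=> [|d IH] S hS hd.
  have : S == ctrl by rewrite eqEcard (hsub _ hS) /= -subn_eq0 -leqn0.
  by move/eqP <-.
case: (eqVneq S ctrl) => [<-//|hne].
have [j hj hSj] := hgrow S hS hne.
apply: (IH _ hSj).
rewrite finset.setUC cardsU1 hj add1n subnS; move: hd; by case: (_ - _)%N.
Qed.

Lemma SsufF {k} : (k <= n)%N -> Ssuf pi k \in F.
Proof.
case: k => [|k] hk; first by rewrite Ssuf0 ctrl_F.
have [p hp] : exists p, onth pi k = Some p.
  case: pi hk (@onth_ex k) => [|a s] //= hk H; exists (nth a (a :: s) k); exact: H.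
have [e _] := SsufS hp; rewrite e.
by have [/setIdP [_ ]] := hy _ _ hp.
Qed.

Lemma pi_ctrl {l j} : onth pi l = Some j -> j \in ctrl.
Proof.
move=> h; have [hl hn] := onth_some h.
by rewrite -hctrl inE -(hn j) mem_nth.
Qed.

Lemma ctrl_pi {j} : j \in ctrl -> exists l, onth pi l = Some j.
Proof. by rewrite -hctrl inE => /onthP. Qed.

Lemma claimA {k} : (k <= n)%N -> forall j,
  hhat0 P0 P1 h0 h1 beta j - \sum_(l < k) y l * w (Ssuf pi l) j = g (Ssuf pi k) (mu k) j.
Proof.
elim: k => [|k IH] hk j.
  by rewrite big_ord0 subr0 Ssuf0 hhat0E /mu big_ord0.
have [p hp] : exists p, onth pi k = Some p.
  case: pi hk (@onth_ex k) => [|a s] //= hk H; exists (nth a (a :: s) k); exact: H.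
have [e hpS] := SsufS hp.
have hpc := pi_ctrl hp.
have hwp := hw _ _ (SsufF (ltnW hk)) hpc.
have [_ hyk _ _] := hy _ _ hp.
have IH' := IH (ltnW hk).
have hg0 : g (Ssuf pi k) (mu k.+1) p = 0.
  rewrite (g_diff _ _ (mu k)) -IH' /mu big_ord_recr /= hyk /=.
  field; exact: lt0r_neq0.
rewrite e g_removal // big_ord_recr /= opprD addrA IH'.
rewrite (g_diff _ (mu k) (mu k.+1)) /mu big_ord_recr /=; ring.
Qed.

Lemma claimB {k p} : onth pi k = Some p ->
  [/\ g (Ssuf pi k) (mu k.+1) p = 0,
      forall j, g (Ssuf pi k.+1) (mu k.+1) j = g (Ssuf pi k) (mu k.+1) j &
      nu p = mu k.+1].
Proof.
move=> hp; have [hk _] := onth_some hp.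
have [e hpS] := SsufS hp.
have hpc := pi_ctrl hp.
have hwp := hw _ _ (SsufF (ltnW hk)) hpc.
have [_ hyk _ hnu] := hy _ _ hp.
have IH' := claimA (ltnW hk).
have hg0 : g (Ssuf pi k) (mu k.+1) p = 0.
  rewrite (g_diff _ _ (mu k)) -IH' /mu big_ord_recr /= hyk /=.
  field; exact: lt0r_neq0.
split => //; move=> j; by rewrite e g_removal.
Qed.


Lemma onth_ex' {k} : (k < n)%N -> exists p, onth pi k = Some p.
Proof.
move=> hk; have [x0 _] : exists x0 : 'I_m, True.
  by case: pi hk => [|a s] //= _; exists a.
by exists (nth x0 pi k); apply: onth_ex.
Qed.

Lemma wpos {k j} : (k <= n)%N -> j \in ctrl -> 0 < w (Ssuf pi k) j.
Proof. by move=> hk hj; apply: hw => //; exact: SsufF. Qed.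

Lemma mono {k} : (k.+1 < n)%N -> mu k.+1 <= mu k.+2.
Proof.
move=> hk.
have [p hp] := onth_ex' (ltnW hk).
have [q hq] := onth_ex' hk.
have [_ _ <-] := claimB hp; have [_ _ <-] := claimB hq.
exact: hmono hp hq.
Qed.

Lemma up d : forall k x j, onth pi (k + d) = Some j -> x <= mu k.+1 ->
  0 <= g (Ssuf pi k) x j.
Proof.
elim: d => [|d IH] k x j.
  rewrite addn0 => hj hx.
  have [hk _] := onth_some hj.
  have hwj := wpos (ltnW hk) (pi_ctrl hj).
  have [hg0 _ _] := claimB hj.
  rewrite (g_diff _ _ (mu k.+1)) hg0 add0r.
  by apply: mulr_ge0; [rewrite subr_ge0 | exact: ltW].
move=> hj hx.
have [hkd _] := onth_some hj.
have hk1 : (k.+1 < n)%N by apply: leq_ltn_trans hkd; rewrite addnS ltnS leq_addr.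
have [p hp] := onth_ex' (ltnW hk1).
have hwj := wpos (ltnW (ltnW hk1)) (pi_ctrl hj).
have [_ e _] := claimB hp.
rewrite addnS -addSn in hj.
have := IH k.+1 (mu k.+1) j hj (mono hk1).
rewrite e => hge.
rewrite (g_diff _ _ (mu k.+1)).
apply: addr_ge0 => //; apply: mulr_ge0; [by rewrite subr_ge0 | exact: ltW].
Qed.

Lemma down d : forall l x j, onth pi l = Some j -> ((l + d).+1 <= n)%N ->
  mu (l + d).+1 <= x -> g (Ssuf pi (l + d).+1) x j <= 0.
Proof.
elim: d => [|d IH] l x j.
  rewrite addn0 => hj hn hx.
  have hwj := wpos hn (pi_ctrl hj).
  have [hg0 e _] := claimB hj.
  rewrite (g_diff _ _ (mu l.+1)) e hg0 add0r.
  have : mu l.+1 - x <= 0 by rewrite subr_le0.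
  move=> h; nra.
move=> hj; rewrite addnS => hn hx.
have hwj := wpos hn (pi_ctrl hj).
have [p hp] := onth_ex' hn.
have [_ e _] := claimB hp.
have hle : mu (l + d).+1 <= mu (l + d).+2 by apply: mono.
have := IH l (mu (l + d).+2) j hj (ltnW hn) hle.
rewrite -e => hle0.
rewrite (g_diff _ _ (mu (l + d).+2)).
have : mu (l + d).+2 - x <= 0 by rewrite subr_le0.
move=> h; nra.
Qed.

Lemma optk k x : (k <= n)%N -> ((k < n)%N -> x <= mu k.+1) -> ((0 < k)%N -> mu k <= x) ->
  forall j, j \in ctrl ->
  (j \in Ssuf pi k -> 0 <= g (Ssuf pi k) x j) /\ (j \notin Ssuf pi k -> g (Ssuf pi k) x j <= 0).
Proof.
move=> hk hh1 hh2 j hj.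
have [l hl] := ctrl_pi hj.
have [hln _] := onth_some hl.
rewrite (mem_Ssuf k hl).
case: (leqP k l) => hkl; split => // _.
  apply: (up (l - k)); first by rewrite subnKC.
  by apply: hh1; exact: leq_ltn_trans hkl hln.
have e : k = (l + (k - l.+1)).+1 by rewrite -addSn subnKC.
rewrite e; apply: down => //; rewrite -e //.
by apply: hh2; exact: leq_ltn_trans (leq0n l) hkl.
Qed.


Lemma vopt_eq k x i : (k <= n)%N -> ((k < n)%N -> x <= mu k.+1) -> ((0 < k)%N -> mu k <= x) ->
  vopt ctrl P0 P1 h0 h1 theta1 beta x i = Y (sp (Ssuf pi k)) x i 0.
Proof.
move=> hk hh1 hh2.
have hopt := opt _ _ (optk k x hk hh1 hh2).
rewrite /vopt.
set E := (X in inf X).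
have hE : E (Y (sp (Ssuf pi k)) x i 0).
  exists (sp (Ssuf pi k)); first exact: sp_adm.
  by rewrite valE //; exact: sp_adm.
have hlb : lbound E (Y (sp (Ssuf pi k)) x i 0).
  move=> z [u hu <-]; rewrite valE //; exact: hopt.
apply/le_anti/andP; split.
  by apply: (ge_inf _ hE); exists (Y (sp (Ssuf pi k)) x i 0).
by apply: lb_le_inf => //; exists (Y (sp (Ssuf pi k)) x i 0).
Qed.

Lemma nu_mu {k p} : onth pi k = Some p -> nu p = mu k.+1.
Proof. by move=> hp; have [_ _ ->] := claimB hp. Qed.

Lemma cover_gen (P : pred 'I_m) :
  exists k, [/\ (k <= n)%N, ((k < n)%N -> forall p, onth pi k = Some p -> P p) &
     ((0 < k)%N -> forall p, onth pi k.-1 = Some p -> ~~ P p)].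
Proof.
case: (posnP n) => hn0.
  exists 0%N; split => //; by rewrite hn0.
have [x0 _] := onth_ex' hn0.
exists (find P pi); split.
- exact: find_size.
- move=> hk p hp; have [_ hn] := onth_some hp.
  rewrite -(hn x0); apply: nth_find; by rewrite has_find.
- move=> hk p hp; have [_ hn] := onth_some hp.
  rewrite -(hn x0) before_find //; by case: (find P pi) hk.
Qed.


Definition cond k x := [/\ (k <= n)%N, ((k < n)%N -> x <= mu k.+1) & ((0 < k)%N -> mu k <= x)].

Lemma hcov x : exists k, cond k x.
Proof.
have [k [hk hh1 hh2]] := cover_gen (fun p => x <= nu p).
exists k; split => //.
  by move=> hkn; have [p hp] := onth_ex' hkn; rewrite -(nu_mu hp); exact: hh1.
move=> hk0; have hk1 : (k.-1 < n)%N by apply: (leq_trans _ hk); rewrite ltn_predL.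
have [p hp] := onth_ex' hk1.
have := hh2 hk0 _ hp; rewrite (nu_mu hp) prednK // -ltNge; exact: ltW.
Qed.

Lemma main :
  let n := size pi in
  let V k x i := vSnu ctrl P0 P1 h0 h1 theta1 beta (Ssuf pi k) x i in
  let v x i := vopt ctrl P0 P1 h0 h1 theta1 beta x i in
  forall i : 'I_m,
    [/\ continuous (fun x : R => v x i),
        concave_fun (fun x => v x i),
        piecewise_linear (fun x => v x i),
        (forall x, (exists2 k, (k <= n)%N & v x i = V k x i) /\
                   (forall k, (k <= n)%N -> v x i <= V k x i)) &
        [/\ forall x p, onth pi 0 = Some p -> x <= nu p -> v x i = V 0%N x i,
            forall x k p q, (1 <= k < n)%N -> onth pi k.-1 = Some p ->
              onth pi k = Some q -> nu p <= x <= nu q -> v x i = V k x i &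
            forall x p, (0 < n)%N -> onth pi n.-1 = Some p -> nu p <= x ->
              v x i = V n x i]].
Proof.
move=> n0 V v i.
have vE : forall x k, cond k x -> v x i = V k x i.
  by move=> x k [a b c]; rewrite /v /V (vopt_eq k x i a b c) vSnuE.
have Vaff : forall k x, V k x i = vS ctrl P0 P1 h0 h1 beta (Ssuf pi k) i + x * bS ctrl P0 P1 theta1 beta (Ssuf pi k) i.
  by [].
have vle : forall x k, (k <= n)%N -> v x i <= V k x i.
  move=> x k hk; have [k0 hk0] := hcov x.
  rewrite (vE _ _ hk0) /V !vSnuE.
  case: hk0 => [a b c]; apply: (opt _ _ (optk k0 x a b c)); exact: sp_adm.
split.
- pose B := \sum_(k < n.+1) `|bS ctrl P0 P1 theta1 beta (Ssuf pi k) i|.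
  apply: (@lipc _ _ B); first by apply: sumr_ge0.
  have hone : forall x z, v z i - v x i <= B * `|z - x|.
    move=> x z; have [k hk] := hcov x.
    have hkn : (k < n.+1)%N by case: hk.
    have := vle z k (ltnSE hkn).
    rewrite (vE _ _ hk) !Vaff => hh.
    set b := bS ctrl P0 P1 theta1 beta (Ssuf pi k) i in hh *.
    have hbB : `|b| <= B.
      rewrite /B (bigD1 (Ordinal hkn)) //= ler_wpDr //; exact: sumr_ge0.
    have : (z - x) * b <= `|z - x| * B.
      apply: le_trans (ler_norm _) _; rewrite normrM; apply: ler_wpM2l => //.
    move=> h2; rewrite mulrC; lra.
  move=> x z; rewrite ler_norml; apply/andP; split; last exact: hone.
  have := hone z x; rewrite distrC; lra.
- move=> x z t /andP[t0 t1].
  have [k hk] := hcov (t * x + (1 - t) * z).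
  rewrite (vE _ _ hk) Vaff.
  have hkn : (k <= n)%N by case: hk.
  have := vle x k hkn; have := vle z k hkn; rewrite !Vaff => hz hx.
  have t1' : 0 <= 1 - t by lra.
  nra.
- exists (map nu pi) => a b hab hno.
  have [k [hk hh1 hh2]] := cover_gen (fun p => a < nu p).
  exists (vS ctrl P0 P1 h0 h1 beta (Ssuf pi k) i), (bS ctrl P0 P1 theta1 beta (Ssuf pi k) i).
  move=> x /andP[ax xb].
  suff hc : cond k x by rewrite (vE x k hc) Vaff mulrC.
  split => //.
    move=> hkn; have [p hp] := onth_ex' hkn; rewrite -(nu_mu hp).
    have hap := hh1 hkn _ hp.
    have hpin : nu p \in map nu pi.
      by apply: map_f; have [_ hn] := onth_some hp; rewrite -(hn p) mem_nth.
    have := hno _ hpin; rewrite hap /= => hnb.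
    rewrite leNgt; apply/negP => hpx; apply: hnb; exact: lt_le_trans hpx xb.
  move=> hk0; have hk1 : (k.-1 < n)%N by apply: (leq_trans _ hk); rewrite ltn_predL.
  have [p hp] := onth_ex' hk1.
  have := hh2 hk0 _ hp; rewrite (nu_mu hp) prednK // -leNgt => h; exact: le_trans h ax.
- move=> x; split; last exact: vle.
  by have [k hk] := hcov x; exists k; [case: hk | exact: vE].
split.
- move=> x p hp hx; apply: vE; split => //.
  by move=> _; rewrite -(nu_mu hp).
- move=> x k p q /andP[hk1 hkn] hp hq /andP[hpx hxq]; apply: vE; split => //.
  + exact: ltnW.
  + by move=> _; rewrite -(nu_mu hq).
  + by move=> _; move: hpx; rewrite (nu_mu hp) prednK.
- move=> x p hn hp hpx; apply: vE; split => //.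
  + by rewrite /n0 ltnn.
  + by move=> _; move: hpx; rewrite (nu_mu hp) prednK.
Qed.

End Bandit2.

Theorem corollary4 (R : realType) (m : nat) (ctrl : {set 'I_m})
  (P0 P1 : 'M[R]_m) (h0 h1 theta1 : 'I_m -> R) (beta : R)
  (F : {set {set 'I_m}}) (pi : seq 'I_m) (nu : 'I_m -> R) :
  stochastic P0 -> stochastic P1 ->
  (forall i j, i \notin ctrl -> P1 i j = P0 i j) ->
  0 < beta < 1 ->
  (forall i, 0 < theta1 i) ->
  accessible_setsys ctrl F ->
  PCL_indexable ctrl P0 P1 h0 h1 theta1 beta F pi nu ->
  let n := size pi in
  let V k x i := vSnu ctrl P0 P1 h0 h1 theta1 beta (Ssuf pi k) x i in
  let v x i := vopt ctrl P0 P1 h0 h1 theta1 beta x i in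
  forall i : 'I_m,
    [/\ continuous (fun x : R => v x i),
        concave_fun (fun x => v x i),
        piecewise_linear (fun x => v x i),
        (forall x, (exists2 k, (k <= n)%N & v x i = V k x i) /\
                   (forall k, (k <= n)%N -> v x i <= V k x i)) &
        [/\ forall x p, onth pi 0 = Some p -> x <= nu p -> v x i = V 0%N x i,
            forall x k p q, (1 <= k < n)%N -> onth pi k.-1 = Some p ->
              onth pi k = Some q -> nu p <= x <= nu q -> v x i = V k x i &
            forall x p, (0 < n)%N -> onth pi n.-1 = Some p -> nu p <= x ->
              v x i = V n x i]].
Proof.
move=> hP0 hP1 hunc hb hth hacc [hw [[hu [hc [y hy]]] hmono]].
exact: (@main _ _ _ _ _ _ _ _ _ hP0 hP1 hb _ _ _ hacc hw hu hc _ hy hmono).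
Qed.
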